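(* Let $p,q$ be positive integers, let $e\in\mathbb{R}^p$ be the vector of all ones, and let $$L:=\{(x,u)\in\mathbb{R}^p\times\mathbb{R}^q:x\ge\|u\|e\},\qquad M:=\{(x,u)\in\mathbb{R}^p\times\mathbb{R}^q:\langle x,e\rangle\ge\|u\|,\ x\ge0\}.$$ Let $(z,w)\in\mathbb{R}^p\times\mathbb{R}^q$. Then: 1. If $z^+\ge\|w\|e$, then $P_L(z,w)=(z^+,w)$ and $P_M(-z,-w)=(z^-,0)$. 2. If $\langle z^-,e\rangle\ge\|w\|$, then $P_L(z,w)=(z^+,0)$ and $P_M(-z,-w)=(z^-,-w)$. 3. If $z^+\not\ge\|w\|e$ and $\langle z^-,e\rangle<\|w\|$, then the piecewise linear equation $$\lambda\|w\|=\left\langle e,[(\lambda+1)z-\|w\|e]^-\right\rangle$$ has a unique positive solution $\lambda>0$, and for this $\lambda$, $$P_L(z,w)=\left(\Big[z-\tfrac{1}{\lambda+1}\|w\|e\Big]^++\tfrac{1}{\lambda+1}\|w\|e,\ \tfrac{1}{\lambda+1}w\right),\qquad P_M(-z,-w)=\left(\Big[z-\tfrac{1}{\lambda+1}\|w\|e\Big]^-,\ -\tfrac{\lambda}{\lambda+1}w\right).$$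
   Context: For a closed convex set $C$, $P_C(x):=\operatorname{argmin}\{\|x-y\|:y\in C\}$ is the metric (orthogonal) projection onto $C$, with respect to the Euclidean norm on $\mathbb{R}^p\times\mathbb{R}^q\cong\mathbb{R}^{p+q}$ (inner product $\langle(x,u),(y,v)\rangle=\langle x,y\rangle+\langle u,v\rangle$). The order $\ge$ on vectors is componentwise; $z^+\not\ge\|w\|e$ means that $z^+\ge\|w\|e$ fails. For $\alpha\in\mathbb{R}$, $\alpha^+:=\max(\alpha,0)$, $\alpha^-:=\max(-\alpha,0)$, applied componentwise to vectors. $L$ and $M$ are mutually dual proper cones (the extended second order cones). *)

(* Defs.v *)
From HB Require Import structures.
From mathcomp Require Import all_boot all_order all_algebra.
From mathcomp Require Import reals.
Set Implicit Arguments. Unset Strict Implicit.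
 Unset Printing Implicit Defensive.
Import Order.TTheory GRing.Theory Num.Theory.
Local Open Scope ring_scope.

Section Defs.
Variable R : realType.

Definition vdot n (x y : 'I_n -> R) : R := \sum_(i < n) x i * y i.
Definition vnorm n (x : 'I_n -> R) : R := Num.sqrt (vdot x x).
Definition ones (n : nat) : 'I_n -> R := fun _ => 1.
Arguments ones : clear implicits.
Definition vpos n (x : 'I_n -> R) : 'I_n -> R := fun i => Num.max (x i) 0.
Definition vneg n (x : 'I_n -> R) : 'I_n -> R := fun i => Num.max (- x i) 0.
Definition vge n (x y : 'I_n -> R) : Prop := forall i, y i <= x i.

Definition pnorm p q (x : 'I_p -> R) (u : 'I_q -> R) : R :=
  Num.sqrt (vdot x x + vdot u u).
Definition pdist p q (a b : ('I_p -> R) * ('I_q -> R)) : R :=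
  pnorm (fun i => a.1 i - b.1 i) (fun j => a.2 j - b.2 j).

Definition is_proj p q (C : ('I_p -> R) * ('I_q -> R) -> Prop)
  (a y : ('I_p -> R) * ('I_q -> R)) : Prop :=
  C y /\ forall y', C y' -> pdist a y <= pdist a y'.

Definition coneL p q (xu : ('I_p -> R) * ('I_q -> R)) : Prop :=
  vge xu.1 (fun i => vnorm xu.2 * ones p i).
Definition coneM p q (xu : ('I_p -> R) * ('I_q -> R)) : Prop :=
  vnorm xu.2 <= vdot xu.1 (ones p) /\ vge xu.1 (fun _ => 0).
End Defs.
Arguments ones : clear implicits.

(* Main.v *)
Require Import Defs.
From HB Require Import structures.
From mathcomp Require Import all_boot all_order all_algebra.
From mathcomp Require Import reals.
From mathcomp Require Import boolp classical_sets topology normedtype.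
From mathcomp Require Import ring lra.
Import Order.TTheory GRing.Theory Num.Theory numFieldNormedType.Exports.
Local Open Scope ring_scope.

Set Implicit Arguments.
Section S.
Variable R : realType.

Lemma cont_sum p (F : 'I_p -> R -> R) (r : seq 'I_p) :
  (forall i, continuous (F i)) ->
  continuous (fun t : R => \sum_(i <- r) F i t).
Proof.
move=> hF; elim: r => [|i r IH].
  under eq_fun do rewrite big_nil. exact: cst_continuous.
under eq_fun do rewrite big_cons.
move=> x; apply: continuousD; [exact: hF|exact: IH].
Qed.

Definition H p (z : 'I_p -> R) (nw t : R) :=
  \sum_(i < p) Num.max (t * nw - z i) 0 - (1 - t) * nw.
Arguments H {p}.

Lemma H_cont p (z : 'I_p -> R) nw : continuous (H z nw).
Proof.
move=> x.
apply: (@continuousB R R^o R (fun t => \sum_(i < p) Num.max (t * nw - z i) 0) (fun t => (1 - t) * nw)).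
  apply: cont_sum => i y.
  apply: (@continuous_max R R (fun t => t * nw - z i) (fun=> 0)).
    apply: (@continuousB R R^o R (fun t => t * nw) (fun=> z i)); last exact: cst_continuous.
    apply: (@continuousM R R (fun t => t) (fun=> nw)); [by move=> ? | exact: cst_continuous].
  exact: cst_continuous.
apply: (@continuousM R R (fun t => 1 - t) (fun=> nw)); last exact: cst_continuous.
apply: (@continuousB R R^o R (fun=> 1) (fun t => t)); [exact: cst_continuous | by move=> ?].
Qed.

Lemma mx0 (a : R) : 0 <= Num.max a 0.
Proof. by rewrite le_max lexx orbT. Qed.

Lemma mx_mono (a b : R) : a <= b -> Num.max a 0 <= Num.max b 0.
Proof.
move=> ab; rewrite ge_max mx0 andbT le_max; by rewrite ab.
Qed.

Lemma posneg (a : R) : Num.max a 0 - Num.max (- a) 0 = a.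
Proof.
case: (leP a 0) => ha.
  by rewrite max_l ?oppr_ge0 // sub0r opprK.
by rewrite max_r ?subr0 // oppr_le0 ltW.
Qed.

Lemma posneg_mul (a : R) : Num.max (- a) 0 * Num.max a 0 = 0.
Proof.
case: (leP a 0) => ha; first by rewrite mulr0.
by rewrite max_r ?mul0r // oppr_le0 ltW.
Qed.

Lemma mx_scale (c a : R) : 0 <= c -> Num.max (c * a) 0 = c * Num.max a 0.
Proof. by move=> hc; rewrite maxr_pMr // mulr0. Qed.

Lemma H_mono p (z : 'I_p -> R) nw s t : 0 < nw -> s < t -> H z nw s < H z nw t.
Proof.
move=> hnw st; rewrite /H.
have : \sum_(i < p) Num.max (s * nw - z i) 0 <= \sum_(i < p) Num.max (t * nw - z i) 0.
  apply: ler_sum => i _; apply: mx_mono.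
  by rewrite lerD2r ler_wpM2r // ltW.
have : s * nw < t * nw by rewrite ltr_pM2r.
lra.
Qed.

Lemma root_ex p (z : 'I_p -> R) nw : 0 < nw ->
  \sum_(i < p) Num.max (- z i) 0 < nw -> (exists i, z i < nw) ->
  exists t, (0 < t < 1) /\ H z nw t = 0.
Proof.
move=> hnw hs [i0 hi0].
have H0 : H z nw 0 < 0.
  rewrite /H subr0 mul1r; under eq_bigr do rewrite mul0r sub0r. lra.
have H1 : 0 < H z nw 1.
  rewrite /H subrr mul0r subr0; under eq_bigr do rewrite mul1r.
  rewrite (bigD1 i0) //=.
  have : 0 <= \sum_(i < p | i != i0) Num.max (nw - z i) 0.
    by apply: sumr_ge0 => i _; apply: mx0.
  have : 0 < Num.max (nw - z i0) 0 by rewrite lt_max subr_gt0 hi0.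
  lra.
have [c hc Hc] : exists2 c, c \in `[0, 1] & H z nw c = 0.
  apply: IVT; first by rewrite ler01.
    by apply: continuous_subspaceT; apply: H_cont.
  by rewrite ge_min le_max (ltW H0) (ltW H1) /= orbT.
move: hc; rewrite in_itv /= => /andP[c0 c1].
exists c; split => //.
rewrite !lt_neqAle c0 c1 !andbT; apply/andP; split.
  by apply/eqP => e; rewrite -e in Hc; rewrite Hc ltxx in H0.
by apply/eqP => e; rewrite e in Hc; rewrite Hc ltxx in H1.
Qed.

Lemma vdotC n (x y : 'I_n -> R) : vdot x y = vdot y x.
Proof. by apply: eq_bigr => i _; rewrite mulrC. Qed.

Lemma vdot_ge0 n (x : 'I_n -> R) : 0 <= vdot x x.
Proof. by apply: sumr_ge0 => i _; rewrite -expr2 sqr_ge0. Qed.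

Lemma vnorm_sq n (x : 'I_n -> R) : vnorm x ^+ 2 = vdot x x.
Proof. by rewrite sqr_sqrtr // vdot_ge0. Qed.

Lemma vnorm_ge0 n (x : 'I_n -> R) : 0 <= vnorm x.
Proof. exact: sqrtr_ge0. Qed.

Lemma vnormZ n (c : R) (x : 'I_n -> R) : vnorm (fun j => c * x j) = `|c| * vnorm x.
Proof.
rewrite /vnorm -sqrtr_sqr -sqrtrM ?sqr_ge0 //; congr Num.sqrt.
rewrite /vdot mulr_sumr; apply: eq_bigr => i _; rewrite expr2; ring.
Qed.

Lemma vnormN n (x : 'I_n -> R) : vnorm (fun j => - x j) = vnorm x.
Proof.
rewrite /vnorm; congr Num.sqrt; apply: eq_bigr => i _; by rewrite mulrNN.
Qed.

Lemma vnorm0 n : vnorm (fun _ : 'I_n => (0:R)) = 0.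
Proof.
rewrite /vnorm /vdot big1 ?sqrtr0 // => i _; by rewrite mulr0.
Qed.

Lemma vdot_zero n (x y : 'I_n -> R) : vdot x x = 0 -> vdot x y = 0.
Proof.
move=> h; rewrite /vdot big1 // => i _.
have := @psumr_eq0P R _ xpredT (fun i => x i * x i) (fun i _ => _) h i isT.
rewrite -expr2 => /(_ (fun j => ltac:(rewrite -expr2; exact: sqr_ge0))) /eqP.
rewrite sqrf_eq0 => /eqP ->.
by rewrite mul0r.
Qed.

Lemma cs n (x y : 'I_n -> R) : - (vnorm x * vnorm y) <= vdot x y.
Proof.
set a := vnorm x; set b := vnorm y.
have ha : 0 <= a := vnorm_ge0 x. have hb : 0 <= b := vnorm_ge0 y.
have hxx : vdot x x = a ^+ 2 by rewrite vnorm_sq.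
have hyy : vdot y y = b ^+ 2 by rewrite vnorm_sq.
case: (ltgtP a 0) => [|a0|a0]; first by rewrite ltNge ha.
  case: (ltgtP b 0) => [|b0|b0]; first by rewrite ltNge hb.
    have hab : 0 < a * b by rewrite mulr_gt0.
    have key : vdot (fun i => b * x i + a * y i) (fun i => b * x i + a * y i)
      = b ^+ 2 * vdot x x + 2 * a * b * vdot x y + a ^+ 2 * vdot y y.
      rewrite /vdot !mulr_sumr -!big_split /=; apply: eq_bigr => i _; ring.
    have := vdot_ge0 (fun i => b * x i + a * y i).
    rewrite key hxx hyy => h. nra.
  rewrite vdotC vdot_zero ?hyy ?b0; first by rewrite mulr0 oppr0.
  by rewrite expr2 mulr0.
rewrite vdot_zero ?hxx ?a0; first by rewrite mul0r oppr0.
by rewrite expr2 mulr0.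
Qed.


Lemma quad n (y' a y m : 'I_n -> R) : (forall i, a i = y i - m i) ->
  vdot (fun i => a i - y' i) (fun i => a i - y' i) =
  vdot (fun i => a i - y i) (fun i => a i - y i) + 2 * vdot m y' - 2 * vdot m y
  + vdot (fun i => y i - y' i) (fun i => y i - y' i).
Proof.
move=> h; rewrite /vdot !mulr_sumr -sumrN -!big_split /=.
apply: eq_bigr => i _; rewrite h; ring.
Qed.

Lemma proj_crit p q (C : ('I_p -> R) * ('I_q -> R) -> Prop) a y m :
  C y -> (forall i, a.1 i = y.1 i - m.1 i) -> (forall j, a.2 j = y.2 j - m.2 j) ->
  vdot m.1 y.1 + vdot m.2 y.2 = 0 ->
  (forall y', C y' -> 0 <= vdot m.1 y'.1 + vdot m.2 y'.2) -> is_proj C a y.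
Proof.
move=> Cy h1 h2 ho hC; split => // y' Cy'.
rewrite /pdist /pnorm; apply: ler_wsqrtr.
rewrite (@quad _ y'.1 _ _ _ h1) (@quad _ y'.2 _ _ _ h2).
have := hC y' Cy'.
have := vdot_ge0 (fun i => y.1 i - y'.1 i).
have := vdot_ge0 (fun j => y.2 j - y'.2 j).
lra.
Qed.

Lemma dual p q (c d : ('I_p -> R) * ('I_q -> R)) :
  coneL c -> coneM d -> 0 <= vdot d.1 c.1 + vdot d.2 c.2.
Proof.
case: c d => [c1 c2] [d1 d2]; rewrite /coneL /coneM /= => hc [hd1 hd2].
have h1 : vnorm c2 * vdot d1 (ones R p) <= vdot d1 c1.
  rewrite /vdot mulr_sumr; apply: ler_sum => i _.
  have := hc i; have := hd2 i; rewrite /ones => a b; nra.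
have h2 := cs d2 c2.
have hn := vnorm_ge0 c2.
have : vnorm c2 * vnorm d2 <= vnorm c2 * vdot d1 (ones R p) by rewrite ler_wpM2l.
nra.
Qed.

Lemma moreau p q (z : 'I_p -> R) (w : 'I_q -> R) y m :
  coneL y -> coneM m -> (forall i, z i = y.1 i - m.1 i) ->
  (forall j, w j = y.2 j - m.2 j) -> vdot m.1 y.1 + vdot m.2 y.2 = 0 ->
  is_proj (@coneL R p q) (z, w) y /\
  is_proj (@coneM R p q) (fun i => - z i, fun j => - w j) m.
Proof.
move=> hy hm h1 h2 ho; split.
  apply: proj_crit => //= y' hy'; exact: dual.
apply: (@proj_crit _ _ _ _ m y) => //=.
- by move=> i; rewrite h1 opprB.
- by move=> j; rewrite h2 opprB.
- by rewrite (vdotC y.1) (vdotC y.2).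
- by move=> y' hy'; rewrite (vdotC y.1) (vdotC y.2); exact: dual.
Qed.

Lemma eqn_rel p (z : 'I_p -> R) nw mu : 0 < mu ->
  vdot (ones R p) (vneg (fun i => (mu + 1) * z i - nw * ones R p i)) =
  (mu + 1) * \sum_(i < p) Num.max ((mu + 1)^-1 * nw - z i) 0.
Proof.
move=> mu0; have hm : 0 < mu + 1 by lra.
rewrite /vdot mulr_sumr; apply: eq_bigr => i _.
rewrite /vneg /ones mul1r mulr1 -mx_scale ?ltW //; congr Num.max.
field; lra.
Qed.

End S.

Unset Implicit Arguments.
Arguments H {R p}.
Arguments root_ex {R p}.
Arguments H_mono {R p}.
Arguments posneg {R}.
Arguments posneg_mul {R}.
Arguments mx0 {R}.
Arguments vnormZ {R n}.
Arguments vnormN {R n}.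
Arguments vnorm0 {R n}.
Arguments vnorm_sq {R n}.
Arguments vdotC {R n}.
Arguments eqn_rel {R p}.

Theorem theorem2 (R : realType) (p q : nat) (hp : (0 < p)%N) (hq : (0 < q)%N)
  (z : 'I_p -> R) (w : 'I_q -> R) :
  let e := ones R p in
  let nw := vnorm w in
  (* 1. *)
  (vge (vpos z) (fun i => nw * e i) ->
     is_proj (@coneL R p q) (z, w) (vpos z, w) /\
     is_proj (@coneM R p q) (fun i => - z i, fun j => - w j)
       (vneg z, fun _ => 0)) /\
  (* 2. *)
  (nw <= vdot (vneg z) e ->
     is_proj (@coneL R p q) (z, w) (vpos z, fun _ => 0) /\
     is_proj (@coneM R p q) (fun i => - z i, fun j => - w j)
       (vneg z, fun j => - w j)) /\
  (* 3. *)
  (~ vge (vpos z) (fun i => nw * e i) -> vdot (vneg z) e < nw ->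
     exists lam : R,
       (0 < lam /\
        lam * nw = vdot e (vneg (fun i => (lam + 1) * z i - nw * e i))) /\
       (forall mu : R, 0 < mu ->
          mu * nw = vdot e (vneg (fun i => (mu + 1) * z i - nw * e i)) ->
          mu = lam) /\
       is_proj (@coneL R p q) (z, w)
         (fun i => vpos (fun k => z k - (lam + 1)^-1 * nw * e k) i
                   + (lam + 1)^-1 * nw * e i,
          fun j => (lam + 1)^-1 * w j) /\
       is_proj (@coneM R p q) (fun i => - z i, fun j => - w j)
         (vneg (fun k => z k - (lam + 1)^-1 * nw * e k),
          fun j => - (lam / (lam + 1)) * w j)).
Proof.
cbv zeta.
have vneg_ge0 : forall i, 0 <= vneg z i by move=> i; exact: mx0.
have sneg_ge0 : 0 <= vdot (vneg z) (ones R p).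
  by apply: sumr_ge0 => i _; rewrite /ones mulr1.
have ortho0 : vdot (vneg z) (vpos z) = 0.
  by rewrite /vdot big1 // => i _; exact: posneg_mul.
split; [|split].
- move=> hz.
  apply: (@moreau _ _ _ _ _ (vpos z, w) (vneg z, fun _ => 0)) => //=.
  + by split => //=; rewrite vnorm0.
  + by move=> i; rewrite posneg.
  + by move=> j; rewrite subr0.
  + by rewrite ortho0 /vdot big1 ?addr0 // => j _; rewrite mul0r.
- move=> hz.
  apply: (@moreau _ _ _ _ _ (vpos z, fun _ => 0) (vneg z, fun j => - w j)) => //=.
  + by move=> i /=; rewrite vnorm0 mul0r; exact: mx0.
  + by split => //=; rewrite vnormN.
  + by move=> i; rewrite posneg.
  + by move=> j; rewrite sub0r opprK.
  + by rewrite ortho0 /vdot big1 ?addr0 // => j _; rewrite mulr0.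
- move=> hnot hlt.
  have hnw : 0 < vnorm w by lra.
  have hs : \sum_(i < p) Num.max (- z i) 0 < vnorm w.
    by move: hlt; rewrite /vdot /ones; under eq_bigr do rewrite mulr1.
  have hex : exists i, z i < vnorm w.
    case: (pselect (exists i, z i < vnorm w)) => // hn; exfalso; apply: hnot => i.
    rewrite /ones mulr1 /vpos le_max; apply/orP; left; rewrite leNgt; apply/negP => hi.
    by apply: hn; exists i.
  have [t [/andP[t0 t1] Ht]] := root_ex z _ hnw hs hex.
  have hsum : \sum_(i < p) Num.max (t * vnorm w - z i) 0 = (1 - t) * vnorm w.
    by move: Ht; rewrite /H; lra.
  set lam := (1 - t) / t.
  have hl1' : lam + 1 = t^-1 by rewrite /lam; field; lra.
  have hl1 : (lam + 1)^-1 = t by rewrite hl1' invrK.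
  have hl0 : 0 < lam by rewrite /lam divr_gt0 // subr_gt0.
  have hl2 : lam / (lam + 1) = 1 - t by rewrite hl1 /lam; field; lra.
  exists lam; split; [|split].
  + split => //; rewrite eqn_rel // hl1 hsum hl1' /lam; field; lra.
  + move=> mu mu0 hmu; rewrite eqn_rel // in hmu.
    set s := (mu + 1)^-1 in hmu.
    have hm1 : mu + 1 != 0 by apply/negP => /eqP; lra.
    have hS : \sum_(i < p) Num.max (s * vnorm w - z i) 0 = s * (mu * vnorm w).
      by rewrite hmu /s mulKf.
    have Hs : H z (vnorm w) s = 0.
      rewrite /H hS /s; field; lra.
    have hst : s = t.
      case: (ltgtP s t) => // st.
        by have := H_mono z _ _ _ hnw st; rewrite Hs Ht ltxx.
      by have := H_mono z _ _ _ hnw st; rewrite Hs Ht ltxx.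
    have : mu + 1 = t^-1 by rewrite -hst /s invrK.
    rewrite -hl1'; lra.
  + rewrite hl2 hl1.
    apply: (@moreau _ _ _ _ _
      ((fun i => vpos (fun k => z k - t * vnorm w * ones R p k) i
                   + t * vnorm w * ones R p i, fun j => t * w j))
      ((vneg (fun k => z k - t * vnorm w * ones R p k),
             fun j => - (1 - t) * w j))) => //=.
    * move=> i /=; rewrite vnormZ (ger0_norm (ltW t0)) /vpos /ones !mulr1.
      have := mx0 (z i - t * vnorm w); lra.
    * split => /=; last by move=> i; exact: mx0.
      rewrite vnormZ ler0_norm; last by lra.
      rewrite /vdot /vneg /ones.
      under eq_bigr do rewrite mulr1 mulr1 opprB.
      rewrite hsum; lra.
    * move=> i; rewrite /vpos /vneg /ones.
      have := posneg (z i - t * vnorm w * 1); lra.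
    * by move=> j; ring.
    * have e1 : vdot (vneg (fun k => z k - t * vnorm w * ones R p k))
          (fun i => vpos (fun k => z k - t * vnorm w * ones R p k) i
                   + t * vnorm w * ones R p i)
          = t * vnorm w * \sum_(i < p) Num.max (t * vnorm w - z i) 0.
        rewrite /vdot mulr_sumr; apply: eq_bigr => i _.
        rewrite /vneg /vpos mulrDr posneg_mul add0r /ones !mulr1 opprB; ring.
      have e2 : vdot (fun j => - (1 - t) * w j) (fun j => t * w j)
          = - (1 - t) * t * vdot w w.
        rewrite /vdot mulr_sumr; apply: eq_bigr => j _; ring.
      rewrite e1 e2 hsum -vnorm_sq; ring.
Qed.
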